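(* Let $A=(V_\exists,V_\forall,E,E_f)$ be a fair game arena and $\alpha$ an $\omega$-regular winning condition over $V$. For every $v\in V$, if $$\exists s\in\Sigma.\,\forall t\in\Pi.\,\mathsf{fair}_\exists(\mathsf{play}_v(s,t))\wedge\big(\mathsf{fair}_\forall(\mathsf{play}_v(s,t))\Rightarrow\mathsf{play}_v(s,t)\in\alpha\big)$$ holds, then $$\exists s\in\Sigma.\,\forall t\in\Pi.\,\mathsf{fair}_\forall(\mathsf{play}_v(s,t))\Rightarrow\big(\mathsf{fair}_\exists(\mathsf{play}_v(s,t))\wedge\mathsf{play}_v(s,t)\in\alpha\big)$$ holds. Moreover, the converse fails in general: there exist a fair game arena, an $\omega$-regular condition $\alpha$ and a node $v$ satisfying the second formula but not the first.
   Context: A fair game arena $A=(V_\exists,V_\forall,E,E_f)$: finite node set $V=V_\exists\cup V_\forall$ (disjoint), right-total moves $E\subseteq V\times V$, fair moves $E_f\subseteq E$. A play is an infinite sequence $\tau=v_0v_1\ldots$ with $(v_j,v_{j+1})\in E$; $\tau_m$ is its sequence of moves; $\mathsf{Inf}$ denotes the set of elements occurring infinitely often. For $i\in\{\exists,\forall\}$, $\tau$ is $i$-fair ($\mathsf{fair}_i(\tau)$) if for all $u\in V_i\cap\mathsf{Inf}(\tau)$, every $(u,u')\in E_f$ is in $\mathsf{Inf}(\tau_m)$. A strategy for player $i$ is a function $p:V^*\cdot V_i\to V$ with $p(w\cdot u)\in E(u)$; $\Sigma$ ($\Pi$) is the set of strategies of $\exists$ ($\forall$); $\mathsf{play}_v(s,t)$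 is the unique play from $v$ compliant with $s$ and $t$. An $\omega$-regular winning condition is an $\omega$-regular language $\alpha\subseteq V^\omega$. *)

(* Defs.v *)
From mathcomp Require Import all_boot.
Set Implicit Arguments. Unset Strict Implicit. Unset Printing Implicit Defensive.

(* Fair game arena A = (V_exists, V_forall, E, E_f) over a finite node set V.
   [owner u = true] means u \in V_exists, [owner u = false] means u \in V_forall
   (so the two sets partition V). *)
Record arena := Arena {
  node : finType;
  owner : node -> bool;
  edge : rel node;
  fedge : rel node;
  edge_total : forall u, exists w, edge u w;
  fedge_sub : forall u w, fedge u w -> edge u w
}.

Definition Pexists : bool := true.
Definition Pforall : bool := false.

Definition trace (A : arena) := nat -> node A.

Definition is_play (A : arena) (tau : trace A) : Prop :=
  forall j, edge (tau j) (tau j.+1).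

Definition inf_node (A : arena) (tau : trace A) (u : node A) : Prop :=
  forall n, exists2 m, n <= m & tau m = u.

Definition inf_move (A : arena) (tau : trace A) (u u' : node A) : Prop :=
  forall n, exists2 m, n <= m & tau m = u /\ tau m.+1 = u'.

Definition fair (A : arena) (i : bool) (tau : trace A) : Prop :=
  forall u, owner u = i -> inf_node tau u ->
    forall u', fedge u u' -> inf_move tau u u'.

(* A strategy of player i : V^* . V_i -> V, represented as a function of the
   history (w, u) (prefix w, current node u), whose value is only constrained
   (to be an E-successor of u) when u \in V_i. *)
Definition strategy (A : arena) (i : bool) :=
  { p : seq (node A) -> node A -> node A |
    forall w u, owner u = i -> edge u (p w u) }.

Section Play.
Variables (A : arena) (v : node A) (s : strategy A Pexists) (t : strategy A Pforall).

Definition next_move (w : seq (node A)) (u : node A) : node A :=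
  if owner u then sval s w u else sval t w u.

Fixpoint history (n : nat) : seq (node A) * node A :=
  match n with
  | 0 => ([::], v)
  | n'.+1 => let: (w, u) := history n' in (rcons w u, next_move w u)
  end.

Definition play : trace A := fun n => (history n).2.
End Play.

Record buchi (V : finType) := Buchi {
  bstate : finType;
  binit : pred bstate;
  bdelta : bstate -> V -> bstate -> bool;
  bacc : pred bstate
}.

Definition buchi_accepts (V : finType) (B : buchi V) (tau : nat -> V) : Prop :=
  exists run : nat -> bstate B,
    [/\ binit (run 0),
        forall n, bdelta (run n) (tau n) (run n.+1)
      & forall n, exists2 m, n <= m & bacc (run m)].

Definition omega_regular (V : finType) (alpha : (nat -> V) -> Prop) : Prop :=
  exists B : buchi V, forall tau, alpha tau <-> buchi_accepts B tau.

Definition formula1 (A : arena) (alpha : trace A -> Prop) (v : node A) : Prop :=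
  exists s : strategy A Pexists, forall t : strategy A Pforall,
    fair Pexists (play v s t) /\
    (fair Pforall (play v s t) -> alpha (play v s t)).

Definition formula2 (A : arena) (alpha : trace A -> Prop) (v : node A) : Prop :=
  exists s : strategy A Pexists, forall t : strategy A Pforall,
    fair Pforall (play v s t) ->
    (fair Pexists (play v s t) /\ alpha (play v s t)).

(* Main.v *)
Require Import Defs.
From mathcomp Require Import all_boot.
Set Implicit Arguments. Unset Strict Implicit. Unset Printing Implicit Defensive.

Section Gen.
Variables (A : arena) (v : node A) (s : strategy A Pexists) (t : strategy A Pforall).

Lemma play_succ n : play v s t n.+1 = next_move s t (history v s t n).1 (play v s t n).
Proof. by rewrite /play /=; case: (history v s t n). Qed.

Lemma hist_succ n : (history v s t n.+1).1 = rcons (history v s t n).1 (play v s t n).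
Proof. by rewrite /play /=; case: (history v s t n). Qed.

Lemma hist_size n : size (history v s t n).1 = n.
Proof. by elim: n => [|n IH] //; rewrite hist_succ size_rcons IH. Qed.

Lemma play_edge n : edge (play v s t n) (play v s t n.+1).
Proof.
rewrite play_succ /next_move; case Ho: (owner _).
- exact: (proj2_sig s).
- exact: (proj2_sig t).
Qed.

Lemma hist_agree (t' : strategy A Pforall) K :
  (forall w u, size w < K -> sval t w u = sval t' w u) ->
  forall n, n <= K -> history v s t n = history v s t' n.
Proof.
move=> Ht; elim=> [|n IH] Hn //=.
rewrite -IH ?(ltnW Hn) //.
case E: (history v s t n) => [w u].
have Hs : size w = n by rewrite -(hist_size n) E.
rewrite /next_move; case: (owner u) => //.
by rewrite Ht // Hs.
Qed.
End Gen.

Definition nX : 'I_4 := @Ordinal 4 0 isT.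
Definition nE : 'I_4 := @Ordinal 4 1 isT.
Definition nY : 'I_4 := @Ordinal 4 2 isT.
Definition nB : 'I_4 := @Ordinal 4 3 isT.

Lemma ord4P (u : 'I_4) : [\/ u = nX, u = nE, u = nY | u = nB].
Proof.
case: u => [[|[|[|[|m]]]] Hu].
- by apply: Or41; apply: val_inj.
- by apply: Or42; apply: val_inj.
- by apply: Or43; apply: val_inj.
- by apply: Or44; apply: val_inj.
- by [].
Qed.

Definition cowner (u : 'I_4) : bool := u == nE.
Definition cedge : rel 'I_4 := fun u w =>
  [|| (u == nX) && ((w == nE) || (w == nY)), (u == nE) && ((w == nX) || (w == nB)),
      (u == nY) && (w == nX) | (u == nB) && (w == nX)].
Definition cfedge : rel 'I_4 := fun u w =>
  ((u == nX) && (w == nY)) || ((u == nE) && (w == nB)).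

Lemma cedge_total u : exists w, cedge u w.
Proof. by case: (ord4P u) => ->; [exists nE|exists nX|exists nX|exists nX]. Qed.

Lemma cfedge_sub u w : cfedge u w -> cedge u w.
Proof. by case/orP => /andP [/eqP -> /eqP ->]. Qed.

Definition CA : arena := Arena cowner cedge_total cfedge_sub.

Lemma cedgeX (w : 'I_4) : cedge nX w -> w = nE \/ w = nY.
Proof. by case: (ord4P w) => ->; auto. Qed.
Lemma cedgeE (w : 'I_4) : cedge nE w -> w = nX \/ w = nB.
Proof. by case: (ord4P w) => ->; auto. Qed.
Lemma cedgeY (w : 'I_4) : cedge nY w -> w = nX.
Proof. by case: (ord4P w) => ->. Qed.
Lemma cedgeB (w : 'I_4) : cedge nB w -> w = nX.
Proof. by case: (ord4P w) => ->. Qed.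

Lemma infX (tau : trace CA) : is_play tau -> forall n, exists2 m, n <= m & tau m = nX.
Proof.
move=> Hp n.
have H1 : forall k, tau k = nY \/ tau k = nB -> tau k.+1 = nX.
  move=> k [] Hk; have := Hp k; rewrite Hk; [exact: cedgeY | exact: cedgeB].
case: (ord4P (tau n)) => Hn.
- by exists n.
- have := Hp n; rewrite Hn => /cedgeE [H|H]; first by exists n.+1.
  by exists n.+2; [rewrite leqW | apply: H1; auto].
- by exists n.+1; [|apply: H1; auto].
- by exists n.+1; [|apply: H1; auto].
Qed.

Definition bdel (q : bool) (a : 'I_4) (q' : bool) : bool :=
  (q' == (q || (a == nY))) && ~~ ((a == nB) && ~~ q).
Definition CB : buchi 'I_4 := Buchi (fun q => ~~ q) bdel predT.
Definition calpha (tau : trace CA) : Prop := buchi_accepts CB tau.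

Definition p2 (w : seq 'I_4) (u : 'I_4) : 'I_4 := if nY \in w then nB else nX.
Lemma p2P : forall w u, cowner u = Pexists -> cedge u (p2 w u).
Proof. by move=> w u /eqP ->; rewrite /p2; case: ifP. Qed.
Definition s2 : strategy CA Pexists := exist _ p2 p2P.

Lemma f2 : formula2 calpha (nX : node CA).
Proof.
exists s2 => t Hf.
set tau := @play CA nX s2 t.
pose seen n := nY \in (@history CA nX s2 t n).1.
have seenS n : seen n.+1 = seen n || (tau n == nY).
  by rewrite /seen hist_succ mem_rcons orbC eq_sym.
have seen_mono n k : n <= k -> seen n -> seen k.
  move=> /subnKC <-; elim: (k - n) => [|d IH]; first by rewrite addn0.
  by move=> H; rewrite addnS seenS IH.
have Hp : is_play tau by move=> j; apply: play_edge.
have stepE k : tau k = nE -> tau k.+1 = (if seen k then nB else nX).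
  by move=> Hk; rewrite /tau play_succ /next_move -/tau Hk.
have HB n : tau n = nB -> seen n.
  case: n => [|k]; first by rewrite /tau /play /=.
  move=> Hk; have := Hp k; rewrite Hk.
  case: (ord4P (tau k)) => Htk; rewrite Htk.
  - by case/cedgeX => H.
  - move=> _; move: (stepE _ Htk); rewrite Hk seenS.
    by case: (seen k).
  - by move/cedgeY.
  - by move/cedgeB.
have [m _ [_ Hm1]] : exists2 m, 0 <= m & tau m = nX /\ tau m.+1 = nY.
  apply: (Hf nX) => //; first exact: infX.
have Hsm : seen m.+2 by rewrite seenS Hm1 eqxx orbT.
split.
- move=> u Hu Hinf u' Hfu.
  have Hu' : u = nE by apply/eqP.
  move: Hfu; rewrite /= /cfedge Hu' /= => /eqP Hu'2; subst u u'.
  move=> n; have [k Hk Htk] := Hinf (maxn n m.+2).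
  exists k; first by apply: leq_trans Hk; apply: leq_maxl.
  split => //; rewrite (stepE _ Htk) (seen_mono m.+2) //.
  by apply: leq_trans Hk; apply: leq_maxr.
- exists seen; split => //.
  move=> n; rewrite /= /bdel seenS eqxx /=.
  by case Hn: (tau n == nB) => //=; rewrite (HB n (eqP Hn)).
  by move=> n; exists n.
Qed.

Definition p0 (w : seq 'I_4) (u : 'I_4) : 'I_4 := if u == nX then nE else nX.
Lemma p0P : forall w u, cowner u = Pforall -> cedge u (p0 w u).
Proof. by move=> w u; case: (ord4P u) => ->. Qed.
Definition t0 : strategy CA Pforall := exist _ p0 p0P.

Definition pK K (w : seq 'I_4) (u : 'I_4) : 'I_4 :=
  if u == nX then (if size w < K then nE else nY) else nX.
Lemma pKP K : forall w u, cowner u = Pforall -> cedge u (pK K w u).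
Proof. by move=> w u; rewrite /pK; case: ifP => //; case: (ord4P u) => -> //; case: ifP. Qed.
Definition tK K : strategy CA Pforall := exist _ (pK K) (@pKP K).

Lemma nf1 : ~ formula1 calpha (nX : node CA).
Proof.
case=> s Hs.
set pl0 := @play CA nX s t0.
have [Hf0 _] := Hs t0.
have Hp0 : is_play pl0 by move=> j; apply: play_edge.
have noY n : pl0 n != nY.
  case: n => [|n] //; rewrite /pl0 play_succ /next_move.
  case Ho: (owner _).
  - have := proj2_sig s (@history CA nX s t0 n).1 _ Ho.
    rewrite /= (eqP Ho) => /cedgeE [] -> //.
  - by rewrite /= /p0; case: ifP.
have infE : inf_node pl0 nE.
  move=> n; have [m Hm Hxm] := infX Hp0 n.
  exists m.+1; first exact: leqW.
  by rewrite /pl0 play_succ /next_move -/pl0 Hxm /= /p0.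
have [N _ [HN HN1]] := Hf0 nE erefl infE nB (eqxx _ : cfedge nE nB) 0.
set K := N.+1.
set plK := @play CA nX s (tK K).
have agree n : n <= K -> plK n = pl0 n.
  move=> Hn; rewrite /plK /pl0 /play (@hist_agree CA nX s (tK K) t0 K) //.
  by move=> w u Hw; rewrite /= /pK Hw.
have [_ HaK] := Hs (tK K).
have HpK : is_play plK by move=> j; apply: play_edge.
have fK : fair Pforall plK.
  move=> u Hu Hinf u'; rewrite /= /cfedge.
  have -> : (u == nE) = false by move: Hu; rewrite /= /cowner => ->.
  rewrite orbF => /andP [/eqP Hu1 /eqP Hu2]; subst u u'.
  move=> n; have [m Hm Hxm] := Hinf (maxn n K).
  exists m; first by apply: leq_trans Hm; apply: leq_maxl.
  split => //; rewrite /plK play_succ /next_move -/plK Hxm /= /pK /=.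
  rewrite (@hist_size CA) ltnNge.
  by have -> : K <= m by apply: leq_trans Hm; apply: leq_maxr.
have [r [Hr0 Hrd _]] := HaK fK.
have rF n : n <= K -> r n = false.
  elim: n => [|n IH] Hn; first by apply/negbTE.
  have := Hrd n; rewrite -/plK /= /bdel IH ?(ltnW Hn) // agree ?(ltnW Hn) //.
  by rewrite (negbTE (noY n)) /= => /andP [/eqP -> _].
have := Hrd K; rewrite -/plK /= /bdel (rF K) // agree //.
have HK : pl0 K = nB by exact: HN1.
rewrite HK eqxx /=.
by rewrite andbF.
Qed.

Theorem lemma4 :
  (forall (A : arena) (alpha : trace A -> Prop) (v : node A),
      omega_regular alpha -> formula1 alpha v -> formula2 alpha v) /\
  (exists (A : arena) (alpha : trace A -> Prop) (v : node A),
      [/\ omega_regular alpha, formula2 alpha v & ~ formula1 alpha v]).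
Proof.
split.
- move=> A alpha v _ [s Hs]; exists s => t Hf.
  by have [H1 H2] := Hs t; split => //; apply: H2.
- exists CA, calpha, (nX : node CA); split.
  + by exists CB.
  + exact: f2.
  + exact: nf1.
Qed.
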